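(* Assume that $k\mapsto\widehat{\mathit{RID}}_j(k;\varepsilon,\mathcal{F},\ell,\mathcal{P}_n,\lambda)$ and $k\mapsto\mathit{RID}_j(k;\varepsilon,\mathcal{F},\ell,\mathcal{P}_n,\lambda)$ are strictly increasing in $k\in[\phi_{\min},\phi_{\max}]$. Then, as the number $B$ of bootstrap samples tends to infinity, the interquartile range of $\widehat{\mathit{RID}}_j$ converges in probability to the interquartile range of $\mathit{RID}_j$.
   Context: Let $\mathcal{D}^{(n)}=\{(X_i,Y_i)\}_{i=1}^n$ be an observed dataset with $X_i\in\mathbb{R}^p$, $Y_i\in\mathbb{R}$, and $\mathcal{P}_n$ its empirical distribution; a bootstrap dataset $\mathcal{D}^{(n)}_b\sim\mathcal{P}_n$ consists of $n$ i.i.d. draws from $\mathcal{P}_n$. Let $\mathcal{F}$ be a model class (for a finite class $|\cdot|$ denotes cardinality; for a continuous class, volume under a measure on the class), $\ell(f,\mathcal{D};\lambda)$ a bounded loss with hyperparameters $\lambda$, $\varepsilon>0$, and $\phi_j(f,\mathcal{D})\in[\phi_{\min},\phi_{\max}]$ a bounded variable importance measure for variable $j$. The Rashomon set is $\mathcal{R}^{\varepsilon}_{\mathcal{D}}=\{f\in\mathcal{F}:\ell(f,\mathcal{D};\lambda)\le\min_{f'\in\mathcal{F}}\ell(f',\mathcal{D};\lambda)+\varepsilon\}$. Define $\mathit{RID}_j(k;\varepsilon,\mathcal{F},\ell,\mathcal{P}_n,\lambda)=\mathbb{E}_{\mathcal{D}^{(n)}_b\sim\mathcal{P}_n}\left[\frac{|\{f\in\mathcal{R}^{\varepsilon}_{\mathcal{D}^{(n)}_b}:\phi_j(f,\mathcal{D}^{(n)}_b)\le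 k\}|}{|\mathcal{R}^{\varepsilon}_{\mathcal{D}^{(n)}_b}|}\right]$ and, for $B$ i.i.d. bootstrap datasets $\mathcal{D}^{(n)}_1,\dots,\mathcal{D}^{(n)}_B\sim\mathcal{P}_n$, $\widehat{\mathit{RID}}_j(k;\varepsilon,\mathcal{F},\ell,\mathcal{P}_n,\lambda)=\frac1B\sum_{b=1}^B\frac{|\{f\in\mathcal{R}^{\varepsilon}_{\mathcal{D}^{(n)}_b}:\phi_j(f,\mathcal{D}^{(n)}_b)\le k\}|}{|\mathcal{R}^{\varepsilon}_{\mathcal{D}^{(n)}_b}|}$. For a strictly increasing CDF $G$ on $[\phi_{\min},\phi_{\max}]$, its interquartile range is determined by the quartiles $k_{0.25},k_{0.75}$ with $G(k_{0.25})=0.25$, $G(k_{0.75})=0.75$, i.e. it is $[k_{0.25},k_{0.75}]$. *)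

(* Defs.v *)
From HB Require Import structures.
From mathcomp Require Import all_boot all_order all_algebra.
From mathcomp Require Import all_classical all_reals all_analysis.
Set Implicit Arguments. Unset Strict Implicit. Unset Printing Implicit Defensive.
Import Order.TTheory GRing.Theory Num.Theory.
Import numFieldNormedType.Exports.
Local Open Scope classical_set_scope.
Local Open Scope ring_scope.

Definition dataset (R : realType) (p n : nat) := 'I_n -> 'rV[R]_p * R.

(* A bootstrap dataset: n i.i.d. draws from the empirical distribution P_n,
   encoded by the sequence of drawn indices s : 'I_n -> 'I_n (uniformly
   distributed over {ffun 'I_n -> 'I_n}). *)
Definition boot_data (R : realType) (p n : nat) (D : dataset R p n)
  (s : {ffun 'I_n -> 'I_n}) : dataset R p n := fun i => D (s i).

Section Rashomon.
Variables (R : realType) (p n : nat) (d : measure_display) (F : measurableType d)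
  (Lam : Type).
Variables (mu : set F -> \bar R) (loss : F -> dataset R p n -> Lam -> R)
  (lam : Lam) (eps : R) (phi : 'I_p -> F -> dataset R p n -> R) (j : 'I_p).

(* Rashomon set R^eps_D; the "min" over F is the infimum of the (bounded) loss,
   which equals the minimum whenever the minimum is attained. *)
Definition rashomon (D : dataset R p n) : set F :=
  [set f | loss f D lam <= inf [set loss g D lam | g in [set: F]] + eps].

Definition rashomon_prop (D : dataset R p n) (k : R) : R :=
  fine (mu (rashomon D `&` [set f | phi j f D <= k])) / fine (mu (rashomon D)).

(* RID_j(k): expectation over D_b ~ P_n (exact average over all n^n index maps). *)
Definition RID (D : dataset R p n) (k : R) : R :=
  (\sum_(s : {ffun 'I_n -> 'I_n}) rashomon_prop (boot_data D s) k)
    / #|{: {ffun 'I_n -> 'I_n}}|%:R.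

Definition RIDhat (D : dataset R p n) (B : nat)
  (w : {ffun 'I_B -> {ffun 'I_n -> 'I_n}}) (k : R) : R :=
  (\sum_(b < B) rashomon_prop (boot_data D (w b)) k) / B%:R.
End Rashomon.

Definition bootProb (R : realType) (n B : nat)
  (E : {ffun 'I_B -> {ffun 'I_n -> 'I_n}} -> Prop) : R :=
  #|[set w : {ffun 'I_B -> {ffun 'I_n -> 'I_n}} | `[< E w >] ]|%:R
    / #|{: {ffun 'I_B -> {ffun 'I_n -> 'I_n}}}|%:R.

(* alpha-quantile of a CDF G on [a,b]: inf {k in [a,b] | alpha <= G k}.
   For strictly increasing G with G(k_alpha) = alpha this is exactly k_alpha. *)
Definition quantile (R : realType) (G : R -> R) (a b alpha : R) : R :=
  inf [set k | a <= k <= b /\ alpha <= G k].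

Definition strictly_increasing_on (R : realType) (G : R -> R) (a b : R) : Prop :=
  forall k1 k2, a <= k1 -> k1 < k2 -> k2 <= b -> G k1 < G k2.

(* Main.v *)
Require Import Defs.
From HB Require Import structures.
From mathcomp Require Import all_boot all_order all_algebra.
From mathcomp Require Import all_classical all_reals all_analysis.
From mathcomp Require Import ring lra.
Import Order.TTheory GRing.Theory Num.Theory.
Import numFieldNormedType.Exports.
Local Open Scope classical_set_scope.
Local Open Scope ring_scope.

Section Quant.
Variables (R : realType) (a b alpha : R).

Lemma q_lb (G : R -> R) : lbound [set k | a <= k <= b /\ alpha <= G k] a.
Proof. by move=> x [/andP[]]. Qed.

Lemma q_range (G : R -> R) : a <= b -> alpha <= G b ->
  a <= quantile G a b alpha <= b.
Proof.
move=> ab Gb; apply/andP; split.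
  apply: lb_le_inf; last exact: q_lb.
  by exists b; split => //; rewrite ab lexx.
apply: ge_inf; first by exists a; exact: q_lb.
by split => //; rewrite ab lexx.
Qed.

Lemma q_below (G : R -> R) k : a <= k -> k <= b ->
  k < quantile G a b alpha -> G k < alpha.
Proof.
move=> ak kb kq; rewrite ltNge; apply/negP => aG.
have : quantile G a b alpha <= k.
  apply: ge_inf; first by exists a; exact: q_lb.
  by split => //; rewrite ak kb.
by rewrite leNgt kq.
Qed.

Lemma q_above (G : R -> R) k : strictly_increasing_on G a b ->
  a <= b -> alpha <= G b ->
  quantile G a b alpha < k -> k <= b -> alpha < G k.
Proof.
move=> inc ab Gb qk kb.
have [y [/andP[ay yb] ay'] yk] := inf_lt (ex_intro _ b (conj (introT andP (conj ab (lexx b))) Gb)) qk.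
exact: le_lt_trans ay' (inc _ _ ay yk kb).
Qed.

Lemma sep_up (G : R -> R) delta : a <= b -> alpha <= G b ->
  strictly_increasing_on G a b -> 0 < delta ->
  exists k c, 0 < c /\ forall H : R -> R, alpha <= H b ->
    quantile G a b alpha + delta <= quantile H a b alpha ->
    c <= `|H k - G k|.
Proof.
move=> ab Gb inc d0; set q := quantile G a b alpha.
have /andP[aq qb] := q_range G ab Gb.
case: (lerP (q + delta / 2) b) => hk.
  exists (q + delta / 2), (G (q + delta/2) - alpha); split.
    by rewrite subr_gt0; apply: q_above => //; rewrite -/q; lra.
  move=> H Hb qH; have /andP[_ qHb] := q_range H ab Hb.
  have : H (q + delta / 2) < alpha.
    apply: q_below => //; lra.
  move=> Hk; rewrite ler_normr; apply/orP; right; lra.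
exists a, 1; split => // H Hb qH; have /andP[_ qHb] := q_range H ab Hb.
exfalso; lra.
Qed.

Lemma sep_down (G : R -> R) delta : a <= b -> alpha <= G b ->
  strictly_increasing_on G a b -> 0 < delta ->
  exists k c, 0 < c /\ forall H : R -> R, alpha <= H b ->
    strictly_increasing_on H a b ->
    quantile H a b alpha + delta <= quantile G a b alpha ->
    c <= `|H k - G k|.
Proof.
move=> ab Gb inc d0; set q := quantile G a b alpha.
have /andP[aq qb] := q_range G ab Gb.
case: (lerP a (q - delta / 2)) => hk.
  exists (q - delta / 2), (alpha - G (q - delta/2)); split.
    by rewrite subr_gt0; apply: q_below => //; rewrite -/q; lra.
  move=> H Hb incH qH; have /andP[aqH _] := q_range H ab Hb.
  have : alpha < H (q - delta / 2).
    apply: q_above => //; lra.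
  move=> Hk; rewrite ler_normr; apply/orP; left; lra.
exists a, 1; split => // H Hb incH qH; have /andP[aqH _] := q_range H ab Hb.
exfalso; lra.
Qed.

End Quant.
Section Cheb.
Variables (R : realType) (S : finType) (h : S -> R).
Hypothesis h0 : \sum_s h s = 0.

Lemma pair_sum B (b b' : 'I_B) :
  \sum_(w : {ffun 'I_B -> S}) h (w b) * h (w b') =
  if b' == b then #|S|%:R ^+ B.-1 * \sum_s h s ^+ 2 else 0.
Proof.
case: (eqVneq b' b) => [->|nb].
  pose F (i : 'I_B) (x : S) := (if i == b then h x ^+ 2 else 1).
  have E : forall w : {ffun 'I_B -> S}, h (w b) * h (w b) = \prod_i F i (w i).
    by move=> w; rewrite /F -big_mkcond /= big_pred1_eq expr2.
  under eq_bigr do rewrite E.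
  rewrite -(bigA_distr_bigA F) (bigD1 b) //= {1}/F eqxx.
  have -> : \prod_(i < B | i != b) \sum_j F i j = \prod_(i < B | i != b) (#|S|%:R : R).
    apply: eq_bigr => i Hi; have ib : (i == b) = false by move: Hi; case: (i == b).
    by rewrite /F ib /= sumr_const.
  rewrite prodr_const.
  have -> : #|[pred i : 'I_B | i != b]| = B.-1 by rewrite cardC1 card_ord.
  by rewrite mulrC.
pose F (i : 'I_B) (x : S) := (if i == b then h x else 1) * (if i == b' then h x else 1).
have E : forall w : {ffun 'I_B -> S}, h (w b) * h (w b') = \prod_i F i (w i).
  move=> w; rewrite big_split /= -!big_mkcond /=.
  by rewrite !big_pred1_eq.
under eq_bigr do rewrite E.
rewrite -(bigA_distr_bigA F) (bigD1 b) //= {1}/F eqxx.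
rewrite eq_sym (negPf nb).
under eq_bigr do rewrite mulr1.
by rewrite h0 mul0r.
Qed.

Lemma sq_sum B :
  \sum_(w : {ffun 'I_B -> S}) (\sum_(b < B) h (w b)) ^+ 2 =
  B%:R * (#|S|%:R ^+ B.-1 * \sum_s h s ^+ 2).
Proof.
transitivity (\sum_(w : {ffun 'I_B -> S}) \sum_(b < B) \sum_(b' < B) h (w b) * h (w b')).
  apply: eq_bigr => w _; rewrite expr2 mulr_suml; apply: eq_bigr => b _.
  by rewrite mulr_sumr.
rewrite exchange_big /=.
under eq_bigr do rewrite exchange_big /=.
under eq_bigr do under eq_bigr do rewrite pair_sum.
under eq_bigr do rewrite -big_mkcond /= big_pred1_eq.
by rewrite sumr_const card_ord mulr_natl.
Qed.
End Cheb.

Section Cheb2.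
Variables (R : realType) (S : finType).

Lemma cheb (g : S -> R) B c : (0 < #|S|)%N -> (0 < B)%N -> 0 < c ->
  #|[set w : {ffun 'I_B -> S} | `[< c <= `|(\sum_(b < B) g (w b)) / B%:R
        - (\sum_s g s) / #|{: S}|%:R| >]]|%:R / #|{: {ffun 'I_B -> S}}|%:R
  <= (\sum_s (g s - (\sum_s g s) / #|{: S}|%:R) ^+ 2) / #|{: S}|%:R / (B%:R * c ^+ 2).
Proof.
move=> S0 B0 c0.
set N := #|{: S}|%:R; set m := (\sum_s g s) / N.
pose h s := g s - m.
have N0 : 0 < N by rewrite ltr0n.
have B0' : (0 : R) < B%:R by rewrite ltr0n.
have h0 : \sum_s h s = 0.
  rewrite /h sumrB sumr_const -mulr_natr -/N /m divfK ?subrr //.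
  by rewrite gt_eqF.
have X : forall w : {ffun 'I_B -> S},
    (\sum_(b < B) g (w b)) / B%:R - m = (\sum_(b < B) h (w b)) / B%:R.
  move=> w; rewrite /h sumrB sumr_const card_ord -mulr_natr.
  by field; rewrite gt_eqF.
set bad := [set w : {ffun 'I_B -> S} | _].
have K : #|bad|%:R * c ^+ 2 <=
    \sum_(w : {ffun 'I_B -> S}) ((\sum_(b < B) h (w b)) / B%:R) ^+ 2.
  rewrite mulr_natl -sumr_const.
  rewrite [X in _ <= X](bigID (fun w => w \in bad)) /= -[X in X <= _]addr0.
  apply: lerD; last by apply: sumr_ge0 => w _; exact: sqr_ge0.
  apply: ler_sum => w; rewrite inE => /asboolP; rewrite X => Hw.
  rewrite -[X in _ <= X]real_normK ?num_real //.
  by rewrite !expr2 ler_pM // ltW.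
have L : \sum_(w : {ffun 'I_B -> S}) ((\sum_(b < B) h (w b)) / B%:R) ^+ 2
    = (\sum_(w : {ffun 'I_B -> S}) (\sum_(b < B) h (w b)) ^+ 2) / B%:R ^+ 2.
  rewrite mulr_suml; apply: eq_bigr => w _; by rewrite expr_div_n.
rewrite L sq_sum // in K.
have CF : #|{: {ffun 'I_B -> S}}|%:R = N ^+ B :> R by rewrite card_ffun card_ord natrX.
rewrite CF.
have NB : N ^+ B = N * N ^+ B.-1 by rewrite -exprS prednK.
have NB0 : 0 < N ^+ B.-1 by rewrite exprn_gt0.
set Q := \sum_s h s ^+ 2 in K *.
have E1 : #|bad|%:R / N ^+ B = (#|bad|%:R * c ^+ 2) / (c ^+ 2 * N ^+ B).
  by field; rewrite NB; apply/andP; split; rewrite ?mulf_neq0 ?gt_eqF ?exprn_gt0.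
have E2 : Q / N / (B%:R * c ^+ 2) =
    (B%:R * (N ^+ B.-1 * Q) / B%:R ^+ 2) / (c ^+ 2 * N ^+ B).
  rewrite NB; field.
  by rewrite (gt_eqF NB0) (gt_eqF c0) (gt_eqF B0') gt_eqF // ltr0n.
rewrite E1 E2 ler_pM2r // invr_gt0 mulr_gt0 ?exprn_gt0 //.
Qed.
End Cheb2.
Lemma lim_aux (R : realType) (f : nat -> R) K :
  (forall B, (0 < B)%N -> 0 <= f B <= K / B%:R) -> f @ \oo --> (0 : R).
Proof.
move=> H.
have ev : \forall B \near \oo, (0 < B)%N by exists 1%N.
apply: (@squeeze_cvgr _ _ _ _ (fun=> 0) (fun B => K / B%:R)).
- by near=> B; apply: H; near: B.
- exact: cvg_cst.
- rewrite -(mulr0 K).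
  have -> : (fun B : nat => K / B%:R) = (fun=> K) \* (fun B : nat => (B%:R : R)^-1) by [].
  apply: cvgM; first exact: cvg_cst.
  have := gtr0_cvgV0 (a := \oo) (f := fun B : nat => (B%:R : R)).
  move=> Hv; apply/Hv; last exact: cvgr_idn.
  by near=> B; rewrite ltr0n; near: B.
Unshelve. all: by end_near.
Qed.

Lemma card_sub2 (T : finType) (A A1 A2 : set T) :
  (forall x, A x -> A1 x \/ A2 x) -> (#|A| <= #|A1| + #|A2|)%N.
Proof.
move=> H.
change (#|in_set A| <= #|in_set A1| + #|in_set A2|)%N.
rewrite -cardUI.
apply: leq_trans (leq_addr _ _).
apply: subset_leq_card; apply/fintype.subsetP => x; rewrite !unfold_in /in_set /=.
move=> /asboolP /H [] ?; apply/orP; [left|right]; exact/asboolP.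
Qed.

Lemma bp_or (R : realType) n B (E E1 E2 : {ffun 'I_B -> {ffun 'I_n -> 'I_n}} -> Prop) :
  (forall w, E w -> E1 w \/ E2 w) -> bootProb R E <= bootProb R E1 + bootProb R E2.
Proof.
move=> H; rewrite /bootProb -mulrDl.
apply: ler_wpM2r; first by rewrite invr_ge0.
rewrite -natrD ler_nat.
apply: card_sub2 => w /= /asboolP /H [] ?; [left|right]; exact/asboolP.
Qed.

Lemma bp_ge0 (R : realType) n B (E : {ffun 'I_B -> {ffun 'I_n -> 'I_n}} -> Prop) :
  0 <= bootProb R E.
Proof. by rewrite /bootProb divr_ge0. Qed.
Theorem mainTheorem5 (R : realType) (p n : nat) (d : measure_display)
  (F : measurableType d) (mu : {measure set F -> \bar R}) (Lam : Type)
  (loss : F -> dataset R p n -> Lam -> R) (lam : Lam) (eps : R)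
  (phi : 'I_p -> F -> dataset R p n -> R) (j : 'I_p) (phimin phimax : R)
  (D : dataset R p n) :
  0 < eps ->
  (exists M : R, forall f D', `|loss f D' lam| <= M) ->
  (forall f D', phimin <= phi j f D' <= phimax) ->
  (forall s : {ffun 'I_n -> 'I_n},
      (0 < mu (rashomon loss lam eps (boot_data D s)) < +oo)%E) ->
  strictly_increasing_on (RID mu loss lam eps phi j D) phimin phimax ->
  (forall (B : nat) (w : {ffun 'I_B -> {ffun 'I_n -> 'I_n}}), (0 < B)%N ->
      strictly_increasing_on (RIDhat mu loss lam eps phi j D w) phimin phimax) ->
  forall delta : R, 0 < delta ->
    (fun B : nat => bootProb R (fun w : {ffun 'I_B -> {ffun 'I_n -> 'I_n}} =>
        delta <= `|quantile (RIDhat mu loss lam eps phi j D w) phimin phimax (1/4)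
                   - quantile (RID mu loss lam eps phi j D) phimin phimax (1/4)|
     \/ delta <= `|quantile (RIDhat mu loss lam eps phi j D w) phimin phimax (3/4)
                   - quantile (RID mu loss lam eps phi j D) phimin phimax (3/4)|))
    @ \oo --> (0 : R).

Proof.
move=> eps0 _ hphi hmu incR incH delta d0.
pose g k (s : {ffun 'I_n -> 'I_n}) := rashomon_prop mu loss lam eps phi j (boot_data D s) k.
have S0 : (0 < #|{ffun 'I_n -> 'I_n}|)%N by apply/card_gt0P; exists [ffun i => i].
have g1 : forall s : {ffun 'I_n -> 'I_n},
    rashomon_prop mu loss lam eps phi j (boot_data D s) phimax = 1.
  move=> s; rewrite /rashomon_prop setIidl; last first.
    by move=> f _ /=; have /andP[] := hphi f (boot_data D s).
  by rewrite divff // gt_eqF // fine_gt0 // hmu.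
have RID1 : RID mu loss lam eps phi j D phimax = 1.
  rewrite /RID; under eq_bigr do rewrite g1.
  by rewrite sumr_const divff // gt_eqF // ltr0n.
have RIDh1 : forall B (w : {ffun 'I_B -> {ffun 'I_n -> 'I_n}}), (0 < B)%N ->
    RIDhat mu loss lam eps phi j D w phimax = 1.
  move=> B w B0; rewrite /RIDhat; under eq_bigr do rewrite g1.
  by rewrite sumr_const card_ord divff // gt_eqF // ltr0n.
have ab : phimin <= phimax.
  pose s0 : {ffun 'I_n -> 'I_n} := [ffun i => i].
  have /andP[H0 _] := hmu s0.
  case: (pselect (exists f, rashomon loss lam eps (boot_data D s0) f)) => [[f _]|nf].
    by have /andP[h1 h2] := hphi f (boot_data D s0); exact: le_trans h1 h2.
  have E0 : rashomon loss lam eps (boot_data D s0) = set0.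
    by apply/seteqP; split => x //= Hx; exfalso; apply: nf; exists x.
  by rewrite E0 measure0 ltxx in H0.
set G := RID mu loss lam eps phi j D.
have a1 : 1/4 <= G phimax by rewrite /G RID1; lra.
have a3 : 3/4 <= G phimax by rewrite /G RID1; lra.
have [ku1 [cu1 [cu1p Hu1]]] := @sep_up R phimin phimax (1/4) G delta ab a1 incR d0.
have [kd1 [cd1 [cd1p Hd1]]] := @sep_down R phimin phimax (1/4) G delta ab a1 incR d0.
have [ku3 [cu3 [cu3p Hu3]]] := @sep_up R phimin phimax (3/4) G delta ab a3 incR d0.
have [kd3 [cd3 [cd3p Hd3]]] := @sep_down R phimin phimax (3/4) G delta ab a3 incR d0.
pose V k := (\sum_s (g k s - (\sum_s g k s) / #|{: {ffun 'I_n -> 'I_n}}|%:R) ^+ 2)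
   / #|{: {ffun 'I_n -> 'I_n}}|%:R.
have CH : forall B k c, (0 < B)%N -> 0 < c ->
    bootProb R (fun w : {ffun 'I_B -> {ffun 'I_n -> 'I_n}} =>
      c <= `|RIDhat mu loss lam eps phi j D w k - RID mu loss lam eps phi j D k|)
    <= V k / (B%:R * c ^+ 2).
  move=> B k c B0 c0; exact: (@cheb R _ (g k) B c S0 B0 c0).
apply: (@lim_aux R _ (V ku1 / cu1 ^+ 2 + V kd1 / cd1 ^+ 2 + V ku3 / cu3 ^+ 2 + V kd3 / cd3 ^+ 2)).
move=> B B0; apply/andP; split; first exact: bp_ge0.
set E := fun w : {ffun 'I_B -> {ffun 'I_n -> 'I_n}} => _ \/ _.
pose Ev k c := fun w : {ffun 'I_B -> {ffun 'I_n -> 'I_n}} =>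
      c <= `|RIDhat mu loss lam eps phi j D w k - RID mu loss lam eps phi j D k|.
have step : forall w, E w -> Ev ku1 cu1 w \/ (Ev kd1 cd1 w \/ (Ev ku3 cu3 w \/ Ev kd3 cd3 w)).
  move=> w; have Hb := RIDh1 B w B0.
  have b1 : 1/4 <= RIDhat mu loss lam eps phi j D w phimax by rewrite Hb; lra.
  have b3 : 3/4 <= RIDhat mu loss lam eps phi j D w phimax by rewrite Hb; lra.
  rewrite /E /Ev; case; rewrite ler_normr => /orP[] h.
  - by left; apply: Hu1 => //; lra.
  - by right; left; apply: Hd1 => //; [exact: incH | lra].
  - by right; right; left; apply: Hu3 => //; lra.
  - by right; right; right; apply: Hd3 => //; [exact: incH | lra].
apply: le_trans (@bp_or R n B _ _ _ step) _.
apply: le_trans (lerD (CH B ku1 cu1 B0 cu1p) (@bp_or R n B _ _ _ (fun w (h : _ \/ _) => h))) _.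
apply: le_trans (lerD (lexx _) (lerD (CH B kd1 cd1 B0 cd1p) (@bp_or R n B _ _ _ (fun w (h : _ \/ _) => h)))) _.
apply: le_trans (lerD (lexx _) (lerD (lexx _) (lerD (CH B ku3 cu3 B0 cu3p) (CH B kd3 cd3 B0 cd3p)))) _.
have Bn : B%:R != 0 :> R by rewrite pnatr_eq0 -lt0n.
rewrite le_eqVlt; apply/orP; left; apply/eqP.
field.
by rewrite Bn (gt_eqF cd3p) (gt_eqF cu3p) (gt_eqF cd1p) (gt_eqF cu1p).
Qed.
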